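(* Let $K$ be a field, $S=K[x_1,\dots,x_n]$, $A\subseteq\{1,\dots,n\}$ and $f=\prod_{j\in A}x_j$. For $L\subseteq A$ let $f_L=\prod_{l\in L}x_l$ and $Z_L=\{x_l^{-1}: l\in L\}\cup\{x_l: l\notin L\}$. Then $$S_f=\bigoplus_{L\subseteq A}f_L^{-1}K[Z_L]$$ is a Stanley decomposition of $S_f$.
   Context: $S_f=K[x_1,\dots,x_n,x_j^{-1}:j\in A]$, with $K$-basis the monomials $x_1^{a_1}\cdots x_n^{a_n}$, $a_j\in\mathbb Z$ for $j\in A$, $a_j\in\mathbb N$ for $j\notin A$. For a monomial $u\in S_f$ and $Z\subseteq\{x_1,\dots,x_n\}\cup\{x_j^{-1}:j\in A\}$ with $\{x_j,x_j^{-1}\}\not\subseteq Z$ for all $j\in A$, $uK[Z]$ is the $K$-span of all $uw$, $w$ a monomial in the elements of $Z$; it is a Stanley space if it is a free $K[Z]$-submodule. A Stanley decomposition of $S_f$ is an expression of $S_f$ as a finite direct sum (of $K$-vector spaces) of Stanley spaces. *)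

(* Defs.v *)
From mathcomp Require Import all_boot all_order all_algebra.
Set Implicit Arguments. Unset Strict Implicit. Unset Printing Implicit Defensive.
Import Order.TTheory GRing.Theory Num.Theory.
Local Open Scope ring_scope.

(* Exponent vectors of Laurent monomials x_1^{a_1} ... x_n^{a_n}, a in Z^n. *)
Definition mono (n : nat) := {ffun 'I_n -> int}.

(* Ambient K-vector space: K-valued coefficient functions on Laurent monomials.
   (Elements of S_f are those lying in the span below, i.e. finitely supported.) *)
Definition lpoly (K : fieldType) (n : nat) := mono n -> K.

Definition lincomb (K : fieldType) (T : eqType) (c : seq (K * T)) : T -> K :=
  fun t => \sum_(x <- c) x.1 * (x.2 == t)%:R.

Definition kspan (K : fieldType) (T : eqType) (M : T -> Prop) : (T -> K) -> Prop :=
  fun p => exists c : seq (K * T), (forall x, x \in c -> M x.2) /\ p = lincomb c.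

(* Exponent vectors of monomials of S_f = K[x_1..x_n, x_j^{-1} : j in A]:
   a_j in Z for j in A, a_j in N for j not in A. *)
Definition Sf_mono (n : nat) (A : {set 'I_n}) (a : mono n) : Prop :=
  forall j, j \notin A -> (0 <= a j)%R.

Definition Sf (K : fieldType) (n : nat) (A : {set 'I_n}) : lpoly K n -> Prop :=
  @kspan K (mono n) (Sf_mono A).

(* Variables: (j, true) stands for x_j, (j, false) for x_j^{-1}. *)
Definition var (n : nat) := ('I_n * bool)%type.

Definition admissible_Z (n : nat) (A : {set 'I_n}) (Z : {set var n}) : Prop :=
  (forall j, (j, false) \in Z -> j \in A) /\
  (forall j, ~ ((j, true) \in Z /\ (j, false) \in Z)).

(* Monomials w in the elements of Z, given by their exponents. *)
Definition Zmono (n : nat) := {ffun var n -> nat}.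
Definition is_Zmono (n : nat) (Z : {set var n}) (w : Zmono n) : Prop :=
  forall v, v \notin Z -> w v = 0%N.

Definition mulmono (n : nat) (u : mono n) (w : Zmono n) : mono n :=
  [ffun j => u j + (w (j, true))%:Z - (w (j, false))%:Z].

Definition stanley_span (K : fieldType) (n : nat) (u : mono n) (Z : {set var n})
  : lpoly K n -> Prop :=
  @kspan K (mono n) (fun a => exists w, is_Zmono Z w /\ a = mulmono u w).

(* The K[Z]-module map K[Z] -> S_f, g |-> u g, applied to a polynomial
   g = sum c_k w_k given as a formal combination of Z-monomials. *)
Definition mul_by_u (K : fieldType) (n : nat) (u : mono n) (c : seq (K * Zmono n))
  : lpoly K n := lincomb [seq (x.1, mulmono u x.2) | x <- c].

(* u K[Z] is a Stanley space: u is a monomial of S_f, Z is admissible, and the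
   cyclic K[Z]-module u K[Z] is free, i.e. g |-> u g is injective on K[Z]. *)
Definition is_stanley_space (K : fieldType) (n : nat) (A : {set 'I_n})
  (u : mono n) (Z : {set var n}) : Prop :=
  Sf_mono A u /\ admissible_Z A Z /\
  (forall c : seq (K * Zmono n), (forall x, x \in c -> is_Zmono Z x.2) ->
     mul_by_u u c = (fun _ => 0) -> lincomb c = (fun _ => 0)).

Definition direct_sum_eq (K : fieldType) (T : Type) (I : finType) (P : pred I)
  (V : I -> (T -> K) -> Prop) (W : (T -> K) -> Prop) : Prop :=
  (forall p, W p <-> exists q : I -> T -> K,
      (forall i, P i -> V i (q i)) /\ p = (fun t => \sum_(i | P i) q i t)) /\
  (forall q : I -> T -> K, (forall i, P i -> V i (q i)) ->
      (fun t => \sum_(i | P i) q i t) = (fun _ => 0) ->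
      forall i, P i -> q i = (fun _ => 0)).

Definition stanley_decomposition (K : fieldType) (n : nat) (A : {set 'I_n})
  (I : finType) (P : pred I) (u : I -> mono n) (Z : I -> {set var n}) : Prop :=
  (forall i, P i -> @is_stanley_space K n A (u i) (Z i)) /\
  @direct_sum_eq K (mono n) I P (fun i => @stanley_span K n (u i) (Z i)) (@Sf K n A).

Definition fL_inv (n : nat) (L : {set 'I_n}) : mono n :=
  [ffun j => if j \in L then (-1)%R else 0%R].

Definition Z_L (n : nat) (L : {set 'I_n}) : {set var n} :=
  [set v : var n | if v.2 then v.1 \notin L else v.1 \in L].

(* Main.v *)
Require Import Defs.
From mathcomp Require Import all_boot all_order all_algebra zify.
Set Implicit Arguments. Unset Strict Implicit. Unset Printing Implicit Defensive.
Import Order.TTheory GRing.Theory Num.Theory.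
Local Open Scope ring_scope.
Definition negset n (a : mono n) : {set 'I_n} := [set j | a j < 0].

Lemma mono_char n (L : {set 'I_n}) (a : mono n) :
  (exists w, is_Zmono (Z_L L) w /\ a = mulmono (fL_inv L) w) <-> negset a = L.
Proof.
split.
  move=> [w [hw ->]]; apply/setP=> j; rewrite inE !ffunE.
  case: (boolP (j \in L)) => hj.
    have -> : w (j,true) = 0%N by apply: hw; rewrite inE /= hj.
    apply/idP; lia.
  have -> : w (j,false) = 0%N by apply: hw; rewrite inE /= (negbTE hj).
  apply/negbTE; rewrite -leNgt; lia.
move=> <-.
exists [ffun v : var n => if v.2 then (if (a v.1 < 0)%R then 0%N else `|a v.1|%N)
   else (if (a v.1 < 0)%R then `|(a v.1 + 1)%R|%N else 0%N)].
split.
  move=> [j b]; rewrite inE /= ffunE /= inE; case: b => /=; case: (a j < 0) => //.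
apply/ffunP => j; rewrite !ffunE /= inE; case h: (a j < 0); lia.
Qed.

Lemma lincomb0 (K : fieldType) (T : eqType) (c : seq (K * T)) t :
  (forall x, x \in c -> x.2 != t) -> lincomb c t = 0.
Proof.
move=> h; rewrite /lincomb big_seq big1 // => x /h /negbTE ->; by rewrite mulr0.
Qed.

Lemma lincomb_cat (K : fieldType) (T : eqType) (c1 c2 : seq (K * T)) t :
  lincomb (c1 ++ c2) t = lincomb c1 t + lincomb c2 t.
Proof. by rewrite /lincomb big_cat. Qed.

Lemma negset_Sf n (A : {set 'I_n}) a : Sf_mono A a <-> negset a \subset A.
Proof.
split.
  move=> h; apply/subsetP=> j; rewrite inE => hj; apply/negPn/negP => /h.
  by rewrite leNgt hj.
move=> /subsetP h j hj; rewrite leNgt; apply/negP => hl; apply/negP: hj.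
by rewrite negbK; apply: h; rewrite inE.
Qed.

Lemma mulmono_inj n (L : {set 'I_n}) w1 w2 :
  is_Zmono (Z_L L) w1 -> is_Zmono (Z_L L) w2 ->
  mulmono (fL_inv L) w1 = mulmono (fL_inv L) w2 -> w1 = w2.
Proof.
move=> h1 h2 e; apply/ffunP => -[j b].
have := congr1 (fun f : mono n => f j) e; rewrite /= !ffunE.
case: (boolP (j \in L)) => hj.
  have E1 : w1 (j,true) = 0%N by apply: h1; rewrite inE /= hj.
  have E2 : w2 (j,true) = 0%N by apply: h2; rewrite inE /= hj.
  rewrite E1 E2; case: b => //= H; [by rewrite E1 E2|].
  by move: H; rewrite !addr0 => /addrI /oppr_inj [].
have E1 : w1 (j,false) = 0%N by apply: h1; rewrite inE /= (negbTE hj).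
have E2 : w2 (j,false) = 0%N by apply: h2; rewrite inE /= (negbTE hj).
rewrite E1 E2; case: b => //= H; [|by rewrite E1 E2].
by move: H; rewrite !subr0 !add0r => -[].
Qed.

Lemma lincomb_neg (K : fieldType) n (L : {set 'I_n}) (c : seq (K * mono n)) t :
  (forall x, x \in c -> negset x.2 = L) -> negset t != L -> lincomb c t = 0.
Proof.
move=> h ht; apply: lincomb0 => x /h hx; apply/eqP => e; move: ht; by rewrite -e hx eqxx.
Qed.

From Stdlib Require Import Classical FunctionalExtensionality.

Theorem proposition2p1 (K : fieldType) (n : nat) (A : {set 'I_n}) :
  @stanley_decomposition K n A _ (fun L : {set 'I_n} => L \subset A)
    (fun L => fL_inv L) (fun L => Z_L L).
Proof.
split.
  move=> L hL; split; [|split].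
  - apply/negset_Sf.
    have -> : negset (fL_inv L) = L.
      by apply/setP => j; rewrite inE ffunE; case: (j \in L).
    exact: hL.
  - split => j; rewrite !inE /=.
      by move=> hj; apply: (subsetP hL).
    by case=> /negP.
  - move=> c hc e; apply: functional_extensionality => t.
    case: (classic (is_Zmono (Z_L L) t)) => ht.
      transitivity (mul_by_u (fL_inv L) c (mulmono (fL_inv L) t)); last by rewrite e.
      rewrite /mul_by_u /lincomb big_map big_seq [RHS]big_seq; apply: eq_bigr => x hx /=.
      case: (eqVneq x.2 t) => [->|ne]; first by rewrite eqxx.
      case: eqP => // E; case/eqP: ne; exact: mulmono_inj (hc _ hx) ht E.
    apply: lincomb0 => x hx; apply/eqP => E; apply: ht; rewrite -E; exact: hc.
split.
  move=> p; split.
    move=> [c [hc ->]].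
    exists (fun L => lincomb [seq x <- c | negset x.2 == L]); split.
      move=> L hL; exists [seq x <- c | negset x.2 == L]; split => //.
      by move=> x; rewrite mem_filter => /andP[/eqP hx _]; apply/mono_char.
    apply: functional_extensionality => t; symmetry.
    have H L : lincomb [seq x <- c | negset x.2 == L] t = (negset t == L)%:R * lincomb c t.
      rewrite /lincomb big_filter big_mkcond big_distrr /=; apply: eq_bigr => x _.
      case: (eqVneq x.2 t) => [->|ne]; first by case: ifP; rewrite ?mul1r ?mul0r.
      by rewrite !mulr0; case: ifP.
    under eq_bigr do rewrite H.
    case: (boolP (negset t \subset A)) => hA.
      rewrite (bigD1 (negset t)) //= eqxx mul1r big1 ?addr0 // => L /andP[_ hL].
      by rewrite eq_sym (negbTE hL) mul0r.
    rewrite big1 => [|L hL].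
      symmetry; apply: lincomb0 => x hx; apply/eqP => E.
      by move/negset_Sf: (hc x hx); rewrite E (negbTE hA).
    have /negbTE -> : negset t != L by apply/eqP => E; move: hA; rewrite E hL.
    by rewrite mul0r.
  move=> [q [hq ->]].
  have [cc hcc] : exists cc : {set 'I_n} -> seq (K * mono n), forall L : {set 'I_n}, L \subset A ->
      (forall x : K * mono n, x \in cc L -> exists w, is_Zmono (Z_L L) w /\ x.2 = mulmono (fL_inv L) w)
      /\ q L = lincomb (cc L).
    have EX : forall L : {set 'I_n}, exists c : seq (K * mono n), L \subset A ->
      (forall x : K * mono n, x \in c -> exists w, is_Zmono (Z_L L) w /\ x.2 = mulmono (fL_inv L) w)
      /\ q L = lincomb c.
      move=> L; case: (boolP (L \subset A)) => hL.
        have [c [h1 h2]] := hq L hL; by exists c.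
      by exists [::].
    have [cc hcc] := fin_all_exists EX.
    by exists cc.
  exists (\big[cat/[::]]_(L : {set 'I_n} | L \subset A) cc L); split.
    move=> x; apply: (big_ind (fun s : seq (K * mono n) => x \in s -> Sf_mono A x.2)) => //.
      by move=> s1 s2 h1 h2; rewrite mem_cat => /orP[]; auto.
    move=> L hL hx; have /mono_char E := (hcc L hL).1 x hx.
    by apply/negset_Sf; rewrite E.
  apply: functional_extensionality => t.
  rewrite (@big_morph _ _ (fun s => lincomb s t) 0 +%R [::] cat); last first.
  - by rewrite /lincomb big_nil.
  - by move=> ? ?; exact: lincomb_cat.
  by apply: eq_bigr => L hL; rewrite (hcc L hL).2.
move=> q hq hs L hL; apply: functional_extensionality => t.
have H (L' : {set 'I_n}) : L' \subset A -> q L' t = (negset t == L')%:R * q L' t.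
  move=> hL'; have [c [hc ->]] := hq L' hL'.
  case: eqP => [_|ne]; first by rewrite mul1r.
  rewrite mul0r; apply: (lincomb_neg (L := L')) => [x hx|]; last by apply/eqP.
  exact/mono_char/hc.
have S := congr1 (fun f => f t) hs; rewrite /= in S.
case: (eqVneq (negset t) L) => [E|ne]; last by rewrite (H L hL) (negbTE ne) mul0r.
rewrite -S (bigD1 L hL) /= big1 ?addr0 // => L' /andP[hL' nL'].
by rewrite (H L' hL') E eq_sym (negbTE nL') mul0r.
Qed.
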